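(* For every $\beta>0$, the origin is the unique equilibrium of the ODE $\dot x=f(x)$ on $\mathbb R^n\times\mathbb R^n$, $$f(x_1,x_2)=\begin{bmatrix}-Dx_1+\gamma DP\big(M(x_2+Q^* )-M(Q^* )\big)\\ \beta Dx_1-\beta Dx_2\end{bmatrix},$$ and every solution converges to the origin as $t\to\infty$. Equivalently, for the ODE $\dot Q^A=DR+\gamma DPM(Q^B)-DQ^A$, $\dot Q^B=\beta D(Q^A-Q^B)$, every solution satisfies $(Q^A(t),Q^B(t))\to(Q^*,Q^* )$.
   Context: Finite MDP with states $\mathcal S$, actions $\mathcal A$, kernel $P$, expected reward vector $R\in\mathbb R^n$, discount $\gamma\in[0,1)$; $n=|\mathcal S||\mathcal A|$. $D$ is the diagonal matrix of a probability distribution $d$ on $\mathcal S\times\mathcal A$ with $d(s,a)>0$; $P$ is the $n\times|\mathcal S|$ matrix with row $(s,a)$ equal to $P(\cdot\mid s,a)$; $M(Q)(s)=\max_aQ(s,a)$; $Q^*=R+\gamma PM(Q^* )$ is the optimal Q-function. *)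

(* Defs.v *)
From HB Require Import structures.
From mathcomp Require Import all_boot all_order all_algebra.
From mathcomp Require Import all_classical all_reals all_analysis.
Set Implicit Arguments. Unset Strict Implicit. Unset Printing Implicit Defensive.
Import Order.TTheory GRing.Theory Num.Theory.
Import numFieldNormedType.Exports.
Local Open Scope ring_scope.

Section MDP.
Variables (R : realType) (S A : finType).

(* M(Q)(s) = max_a Q(s,a); a0 is any action (A nonempty), used only as the
   seed of the iterated max, so the value does not depend on a0. *)
Definition Mmax (a0 : A) (Q : S * A -> R) (s : S) : R :=
  \big[Num.max/Q (s, a0)]_(a : A) Q (s, a).

Definition Papp (P : S * A -> S -> R) (V : S -> R) (i : S * A) : R :=
  \sum_(s' : S) P i s' * V s'.

(* the vector field f(x1,x2) of the paper (D = diag d) *)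
Definition f1 (a0 : A) (d : S * A -> R) (P : S * A -> S -> R) (gamma : R)
  (Qs : S * A -> R) (x1 x2 : S * A -> R) (i : S * A) : R :=
  - (d i * x1 i) +
  gamma * d i * Papp P (fun s => Mmax a0 (fun j => x2 j + Qs j) s - Mmax a0 Qs s) i.

Definition f2 (d : S * A -> R) (beta : R) (x1 x2 : S * A -> R) (i : S * A) : R :=
  beta * d i * x1 i - beta * d i * x2 i.

Definition gA (a0 : A) (d : S * A -> R) (P : S * A -> S -> R) (Rw : S * A -> R)
  (gamma : R) (QA QB : S * A -> R) (i : S * A) : R :=
  d i * Rw i + gamma * d i * Papp P (Mmax a0 QB) i - d i * QA i.

Definition gB (d : S * A -> R) (beta : R) (QA QB : S * A -> R) (i : S * A) : R :=
  beta * d i * (QA i - QB i).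

End MDP.

(* Main.v *)
Require Import Defs.
From HB Require Import structures.
From mathcomp Require Import all_boot all_order all_algebra.
From mathcomp Require Import all_classical all_reals all_analysis.
From mathcomp Require Import lra ring.
Import Order.TTheory GRing.Theory Num.Theory.
Set Implicit Arguments. Unset Strict Implicit.
Import numFieldNormedType.Exports.
Local Open Scope classical_set_scope. Local Open Scope ring_scope.

Lemma Mmax_ge (R : realType) (S A : finType) (a0 : A) (Q : S * A -> R) s a :
  Q (s, a) <= Mmax a0 Q s.
Proof. by rewrite /Mmax (bigD1 a) //= le_max lexx. Qed.

Lemma Mmax_le (R : realType) (S A : finType) (a0 : A) (Q : S * A -> R) s C :
  (forall a, Q (s, a) <= C) -> Mmax a0 Q s <= C.
Proof.
move=> H; rewrite /Mmax; apply: (big_ind (fun v => v <= C)) => //.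
by move=> x y hx hy; rewrite ge_max hx hy.
Qed.

Lemma Mmax_lip (R : realType) (S A : finType) (a0 : A) (x Q : S * A -> R) (B : R) s :
  (forall j, `|x j| <= B) ->
  `|Mmax a0 (fun j => x j + Q j) s - Mmax a0 Q s| <= B.
Proof.
move=> H; rewrite ler_norml; apply/andP; split.
- have : Mmax a0 Q s <= Mmax a0 (fun j => x j + Q j) s + B.
    apply: Mmax_le => a; have := Mmax_ge a0 (fun j => x j + Q j) s a.
    have := H (s, a); rewrite ler_norml => /andP[h1 h2] /=; lra.
  lra.
- have : Mmax a0 (fun j => x j + Q j) s <= Mmax a0 Q s + B.
    apply: Mmax_le => a; have := Mmax_ge a0 Q s a.
    have := H (s, a); rewrite ler_norml => /andP[h1 h2] /=; lra.
  lra.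
Qed.

Lemma Papp_bound (R : realType) (S A : finType) (P : S * A -> S -> R) (y : S -> R) (B : R) i :
  (forall i s', 0 <= P i s') -> (forall i, \sum_(s' : S) P i s' = 1) ->
  (forall s, `|y s| <= B) -> `|Papp P y i| <= B.
Proof.
move=> P0 P1 H; rewrite /Papp.
apply: le_trans (ler_norm_sum _ _ _) _.
apply: le_trans (_ : \sum_s' P i s' * B <= _).
  apply: ler_sum => s' _; rewrite normrM ger0_norm //.
  by apply: ler_wpM2l => //.
by rewrite -big_distrl /= P1 mul1r.
Qed.

Lemma dmin_pos (R : realType) (I : finType) (d : I -> R) :
  (forall i, 0 < d i) -> 0 < \big[Num.min/1]_i d i.
Proof.
move=> H; apply: (big_ind (fun v => 0 < v)) => //.
by move=> x y hx hy; rewrite lt_min hx hy.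
Qed.

Lemma dmin_le (R : realType) (I : finType) (d : I -> R) i :
  \big[Num.min/1]_i d i <= d i.
Proof. by rewrite (bigD1 i) //= ge_min lexx. Qed.

Lemma is_derive_scal (R : realType) (g : R -> R) (t dg k : R) :
  is_derive t (1:R) g dg -> is_derive t (1:R) (fun u => k * g u) (k * dg).
Proof. move=> h; have := is_deriveZ k h. done. Qed.

Lemma deriv_neg_left (R: realType) (h : R -> R) (s l : R) :
  is_derive s (1:R) h l -> l < 0 ->
  exists2 del, 0 < del & forall t, s - del < t -> t < s -> h s < h t.
Proof.
move=> [dh dv] l0.
have Hc : (fun e : R => e^-1 *: ((h \o shift s) (e *: 1) - h s)) @ 0^' --> l.
  by rewrite -dv; exact: dh.
move/cvgrPdist_lt: Hc => /(_ (- l)); rewrite oppr_gt0 => /(_ l0).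
move=> /nbhs_ballP[del /= del0 Hd].
exists del => // t h1 h2.
have ts0 : t - s < 0 by rewrite subr_lt0.
have hb : ball (0:R) del (t - s).
  by rewrite /ball /= sub0r normrN ltr0_norm //; lra.
have := Hd (t - s) hb (ltr0_neq0 ts0).
rewrite ltr_norml => /andP[+ _].
rewrite -[(t - s)%:A]/((t-s) * 1) mulr1 subrK /=.
rewrite opprK /GRing.scale /= => Hq.
have : (t - s)^-1 * (h t - h s) < 0 by lra.
rewrite nmulr_rlt0 ?invr_lt0 //.
by rewrite subr_gt0.
Qed.

Lemma deriv_cont (R: realType) (h : R -> R) (s l : R) :
  is_derive s (1:R) h l -> h x @[x --> s] --> h s.
Proof. by move=> [dh _]; apply/differentiable_continuous/derivable1_diffP. Qed.

Lemma near_ball (R: realType) (s : R) (P : R -> Prop) :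
  (\forall t \near s, P t) -> exists2 del, 0 < del & forall t, `|s - t| < del -> P t.
Proof. by move/nbhs_ballP => [del /= del0 H]; exists del => // t; apply: H. Qed.

Lemma barrier (R: realType) (I: finType) (u : I -> R -> R) (b : R -> R)
  (u' : I -> R -> R) (b' : R -> R) (t0 t1 : R) :
  0 < t0 ->
  (forall k (t : R), 0 < t -> is_derive t (1:R) (u k) (u' k t)) ->
  (forall t : R, 0 < t -> is_derive t (1:R) b (b' t)) ->
  (forall k, u k t0 < b t0) ->
  (forall t k, t0 < t -> t <= t1 -> (forall j, u j t <= b t) -> u k t = b t ->
     u' k t < b' t) ->
  forall t k, t0 <= t -> t <= t1 -> u k t < b t.
Proof.
move=> t00 du db init cont t2 k2 t02 t21.
apply/negPn/negP; rewrite -leNgt => bad.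
set E := [set t | t0 <= t /\ t <= t2 /\ exists k, b t <= u k t].
have E2 : E t2 by split => //; split => //; exists k2.
have Elb : has_lbound E by exists t0 => t [].
have Ene : E !=set0 by exists t2.
set s := inf E.
have t0s : t0 <= s by apply: lb_le_inf => // t [].
have st2 : s <= t2 by apply: ge_inf.
have s0 : 0 < s by apply: lt_le_trans t0s.
have left : forall t, t0 <= t -> t < s -> forall k, u k t < b t.
  move=> t h1 h2 k; apply/negPn/negP; rewrite -leNgt => hk.
  have : s <= t by apply: ge_inf => //; split => //; split; [lra|exists k].
  lra.
have hcont : forall k, (fun x => u k x - b x) x @[x --> s] --> (u k s - b s).
  move=> k; apply: (@deriv_cont _ _ _ (u' k s - b' s)).
  exact: is_deriveB (du k s s0) (db s s0).
have sE : exists k, b s <= u k s.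
  apply/not_existsP => /= H.
  have Hs : forall k, u k s - b s < 0.
    by move=> k; rewrite subr_lt0 ltNge; apply/negP => hk; apply: (H k).
  have : \forall t \near s, forall k, u k t - b t < 0.
    apply: (@filter_forall R I (fun k t => u k t - b t < 0) (nbhs s) _) => k.
    exact: cvgr_lt (hcont k) _ (Hs k).
  move=> /near_ball [del del0 Hd].
  have [e Ee es] := inf_adherent del0 (conj Ene Elb).
  have se : s <= e by apply: ge_inf.
  have := Hd e; rewrite ler0_norm ?subr_le0 // opprB => /(_ ltac:(lra)).
  case: Ee => _ [_ [k hk]] /(_ k); lra.
have allle : forall j, u j s <= b s.
  move=> j; rewrite leNgt; apply/negP => hj.
  have : \forall t \near s, 0 < u j t - b t.
    apply: (cvgr_gt _ (hcont j)); lra.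
  move=> /near_ball [del del0 Hd].
  have [ts|st] := leP t0 (s - del / 2).
    have := Hd (s - del/2); rewrite opprB addrC subrK gtr0_norm ?divr_gt0 //.
    move=> /(_ ltac:(lra)) => H.
    have := left (s - del/2) ts ltac:(lra) j; lra.
  have := Hd t0; rewrite ger0_norm ?subr_ge0 // => /(_ ltac:(lra)) H.
  have := init j; lra.
case: sE => k hk.
have eqk : u k s = b s by apply/le_anti; rewrite hk allle.
have t0lts : t0 < s.
  rewrite lt_neqAle t0s andbT; apply/eqP => et; have := init k; rewrite et; lra.
have hd := cont s k t0lts (le_trans st2 t21) allle eqk.
have [del del0 Hd] := @deriv_neg_left _ _ _ _ (is_deriveB (du k s s0) (db s s0))
  ltac:(rewrite subr_lt0 //).
set t := Num.max t0 (s - del / 2).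
have t0t : t0 <= t by rewrite le_max lexx.
have ts : t < s by rewrite gt_max t0lts; lra.
have := Hd t ltac:(rewrite lt_max; apply/orP; right; lra) ts.
have := left t t0t ts k.
move=> H1 H2; have H3 : u k s - b s < u k t - b t := H2; lra.
Qed.

Lemma is_derive_lin (R : realType) (a m t : R) :
  is_derive t (1:R) (fun u => a + m * u) m.
Proof.
have := is_deriveD (is_derive_cst a t (1:R)) (is_deriveZ m (is_derive_id t (1:R))).
by rewrite add0r /= [m%:A]mulr1.
Qed.

Definition sgn (R : realType) (b : bool) : R := if b then 1 else -1.

Lemma conv_main (R : realType) (S A : finType) (a0 : A)
  (P : S * A -> S -> R) (gamma : R) (d : S * A -> R)
  (Qs : S * A -> R) (beta : R) :
  (forall i s', 0 <= P i s') -> (forall i, \sum_(s' : S) P i s' = 1) ->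
  0 <= gamma -> gamma < 1 ->
  (forall i, 0 < d i) -> 0 < beta ->
  forall x1 x2 : R -> S * A -> R,
      (forall t : R, 0 < t -> forall i,
          is_derive t (1 : R) (fun u => x1 u i) (f1 a0 d P gamma Qs (x1 t) (x2 t) i) /\
          is_derive t (1 : R) (fun u => x2 u i) (f2 d beta (x1 t) (x2 t) i)) ->
  forall eps : R, 0 < eps -> exists T : R, forall t, T <= t -> forall i,
      `|x1 t i| < eps /\ `|x2 t i| < eps.
Proof.
move=> P0 P1 g0 g1 d0 b0 x1 x2 ode eps eps0.
pose c : R := (1 + gamma) / 2.
have c0 : 0 < c by rewrite /c; lra.
have c1 : c < 1 by rewrite /c; lra.
have gc : gamma < c by rewrite /c; lra.
pose k1 : R := 1 - gamma / c.
have k10 : 0 < k1 by rewrite /k1 subr_gt0 ltr_pdivrMr // mul1r.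
pose k2 : R := beta * (1 - c).
have k20 : 0 < k2 by rewrite /k2 mulr_gt0 // subr_gt0.
pose dm := \big[Num.min/1]_i d i.
have dm0 : 0 < dm := dmin_pos d0.
pose kap := dm * Num.min k1 k2.
have kap0 : 0 < kap by rewrite mulr_gt0 // lt_min k10 k20.
pose I := ((S * A) * bool * bool)%type.
pose u (p : I) (t : R) : R :=
  sgn R p.2 * (if p.1.2 then x1 t p.1.1 else c * x2 t p.1.1).
pose u' (p : I) (t : R) : R :=
  sgn R p.2 * (if p.1.2 then f1 a0 d P gamma Qs (x1 t) (x2 t) p.1.1
               else c * f2 d beta (x1 t) (x2 t) p.1.1).
have du : forall p (t : R), 0 < t -> is_derive t (1:R) (u p) (u' p t).
  move=> [[i w] sg] t t0; rewrite /u /u' /=.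
  have [h1 h2] := ode t t0 i.
  case: w; apply: is_derive_scal => //; exact: is_derive_scal.
have contact : forall t p (B : R), (forall j, u j t <= B) -> u p t = B ->
    u' p t <= - (kap * B).
  move=> t [[i w] sg] B hall hp.
  have bx1 : forall j, `|x1 t j| <= B.
    move=> j; rewrite ler_norml; apply/andP; split.
    - have := hall (j, true, false); rewrite /u /= mulN1r; lra.
    - by have := hall (j, true, true); rewrite /u /= mul1r.
  have bx2 : forall j, c * `|x2 t j| <= B.
    move=> j; rewrite -[c]ger0_norm ?(ltW c0) // -normrM ler_norml.
    apply/andP; split.
    - have := hall (j, false, false); rewrite /u /= mulN1r; lra.
    - by have := hall (j, false, true); rewrite /u /= mul1r.
  have B0 : 0 <= B by apply: le_trans (bx1 i).
  have dmi := dmin_le d i.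
  have di := d0 i.
  have kk1 : kap * B <= d i * k1 * B.
    apply: ler_wpM2r => //; rewrite /kap; apply: ler_pM => //.
    - exact: ltW. 
    - by rewrite le_min (ltW k10) (ltW k20).
    - by rewrite ge_min lexx.
  have kk2 : kap * B <= d i * k2 * B.
    apply: ler_wpM2r => //; rewrite /kap; apply: ler_pM => //.
    - exact: ltW. 
    - by rewrite le_min (ltW k10) (ltW k20).
    - by rewrite ge_min lexx orbT.
  move: hp; rewrite /u /u' /=; case: w => /=.
  -
    rewrite /f1.
    set g := Papp P (fun s : S => _) i.
    have gb : `|g| <= B / c.
      apply: Papp_bound => // s; apply: Mmax_lip => j.
      by rewrite ler_pdivlMr // mulrC.
    have hB : - (d i * B) + gamma * d i * (B / c) = - (d i * k1 * B).
      by rewrite /k1; ring.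
    have gdg0 : 0 <= gamma * d i by rewrite mulr_ge0 // ltW.
    case: sg => /=; rewrite ?mul1r ?mulN1r => hx.
    + have : gamma * d i * g <= gamma * d i * (B / c).
        by apply: ler_wpM2l => //; apply: le_trans (ler_norm _) gb.
      rewrite hx; lra.
    + have : gamma * d i * (- g) <= gamma * d i * (B / c).
        by apply: ler_wpM2l => //; apply: le_trans gb; rewrite -normrN ler_norm.
      have hx' : x1 t i = - B by rewrite -hx opprK.
      rewrite hx' mulrN; lra.
  -
    rewrite /f2.
    have hB : beta * d i * (c * B) - beta * d i * B = - (d i * k2 * B).
      by rewrite /k2; ring.
    have bd0 : 0 <= beta * d i by rewrite mulr_ge0 // ltW.
    have cx1 : c * `|x1 t i| <= c * B by apply: ler_wpM2l => //; exact: ltW.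
    case: sg => /=; rewrite ?mul1r ?mulN1r => hx.
    + have : beta * d i * (c * x1 t i) <= beta * d i * (c * B).
        by apply: ler_wpM2l => //; apply: le_trans cx1; apply: ler_wpM2l;
          [exact: ltW | exact: ler_norm].
      have e : c * (beta * d i * x1 t i - beta * d i * x2 t i) =
        beta * d i * (c * x1 t i) - beta * d i * (c * x2 t i) by ring.
      rewrite e hx; lra.
    + have : beta * d i * (c * - x1 t i) <= beta * d i * (c * B).
        apply: ler_wpM2l => //; apply: le_trans cx1; apply: ler_wpM2l;
          [exact: ltW | by rewrite -normrN ler_norm].
      have e : - (c * (beta * d i * x1 t i - beta * d i * x2 t i)) =
        beta * d i * (c * - x1 t i) - beta * d i * (- (c * x2 t i)) by ring.
      rewrite e hx; lra.
pose e' := c * eps.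
have e'0 : 0 < e' by rewrite mulr_gt0.
pose K := \sum_(p : I) `|u p 1|.
have Kge : forall p, u p 1 <= K.
  move=> p; apply: le_trans (ler_norm _) _; rewrite /K (bigD1 p) //=.
  by rewrite lerDl sumr_ge0.
have K0 : 0 <= K by apply: sumr_ge0.
pose alpha := kap * e' / 2.
have al0 : 0 < alpha by rewrite /alpha divr_gt0 // mulr_gt0.
pose T := 1 + K / alpha.
have T1 : 1 <= T by rewrite /T lerDl divr_ge0 // ltW.
have aT : alpha * (T - 1) = K.
  by rewrite /T; field; rewrite gt_eqF.
pose b1 := fun t : R => (K + e' + alpha) + (- alpha) * t.
have step1 : forall p, u p T < e'.
  move=> p.
  have -> : e' = b1 T by rewrite /b1; lra.
  apply: (@barrier R I u b1 u' (fun=> - alpha) 1 T) => //.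
  - by move=> t _; apply: is_derive_lin.
  - by move=> k; rewrite /b1; have := Kge k; lra.
  - move=> t k h1 h2 hall heq.
    have hc := contact t k (b1 t) hall heq.
    have : alpha * (t - 1) <= alpha * (T - 1) by apply: ler_wpM2l; [exact: ltW|lra].
    rewrite aT => hle.
    have hb : e' <= b1 t by rewrite /b1; lra.
    have : kap * e' <= kap * b1 t by apply: ler_wpM2l => //; exact: ltW.
    have : 0 < kap * e' by rewrite mulr_gt0.
    rewrite /alpha in hle *; lra.
exists T => t hT i.
have step2 : forall p, u p t < e'.
  move=> p.
  apply: (@barrier R I u (fun=> e') u' (fun=> 0) T t) => //.
  - by apply: lt_le_trans T1.
  - move=> t' k h1 h2 hall heq.
    have hc := contact t' k e' hall heq.
    have : 0 < kap * e' by rewrite mulr_gt0.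
    lra.
have ee : e' < eps by rewrite /e' gtr_pMl.
have := step2 (i, true, true); have := step2 (i, true, false).
have := step2 (i, false, true); have := step2 (i, false, false).
rewrite /u /= ?mul1r ?mulN1r => h1 h2 h3 h4.
rewrite /e' in h1 h2 h3 h4 ee.
split; rewrite ltr_norml; apply/andP; split; try lra.
- rewrite -(ltr_pM2l c0) mulrN; lra.
- rewrite -(ltr_pM2l c0); lra.
Qed.

Lemma conv_to (R : realType) (f : R -> R) (l : R) :
  (forall eps : R, 0 < eps -> exists T : R, forall t, T <= t -> `|f t - l| < eps) ->
  f t @[t --> +oo] --> l.
Proof.
move=> H; apply/cvgrPdist_lt => eps eps0.
have [T HT] := H eps eps0.
exists T; split; first exact: num_real.
by move=> t hT; rewrite distrC; apply: HT; exact: ltW.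
Qed.

Lemma Papp_sub (R : realType) (S A : finType) (P : S * A -> S -> R) (y z : S -> R) i :
  Papp P (fun s => y s - z s) i = Papp P y i - Papp P z i.
Proof. by rewrite /Papp -sumrB; apply: eq_bigr => s _; rewrite mulrBr. Qed.

Unset Implicit Arguments. Set Strict Implicit.

Theorem mainTheorem12 (R : realType) (S A : finType) (a0 : A)
  (P : S * A -> S -> R) (Rw : S * A -> R) (gamma : R) (d : S * A -> R)
  (Qs : S * A -> R) (beta : R) :
  (forall i s', 0 <= P i s') -> (forall i, \sum_(s' : S) P i s' = 1) ->
  0 <= gamma -> gamma < 1 ->
  (forall i, 0 < d i) -> \sum_(i : S * A) d i = 1 ->
  (forall i, Qs i = Rw i + gamma * Papp P (Mmax a0 Qs) i) ->
  0 < beta ->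
  (* the origin is the unique equilibrium *)
  (forall x1 x2 : S * A -> R,
      ((forall i, f1 a0 d P gamma Qs x1 x2 i = 0 /\ f2 d beta x1 x2 i = 0)
       <-> (forall i, x1 i = 0 /\ x2 i = 0)))
  /\
  (* every solution of xdot = f(x) converges to the origin *)
  (forall x1 x2 : R -> S * A -> R,
      (forall t : R, 0 < t -> forall i,
          is_derive t (1 : R) (fun u => x1 u i) (f1 a0 d P gamma Qs (x1 t) (x2 t) i) /\
          is_derive t (1 : R) (fun u => x2 u i) (f2 d beta (x1 t) (x2 t) i)) ->
      forall i, (x1 t i @[t --> +oo] --> 0) /\ (x2 t i @[t --> +oo] --> 0))
  /\
  (* equivalently: every solution of the Q^A/Q^B ODE converges to the pair (Qs, Qs) *)
  (forall QA QB : R -> S * A -> R,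
      (forall t : R, 0 < t -> forall i,
          is_derive t (1 : R) (fun u => QA u i) (gA a0 d P Rw gamma (QA t) (QB t) i) /\
          is_derive t (1 : R) (fun u => QB u i) (gB d beta (QA t) (QB t) i)) ->
      forall i, (QA t i @[t --> +oo] --> Qs i) /\ (QB t i @[t --> +oo] --> Qs i)).
Proof.
move=> P0 P1 g0 g1 d0 dsum HQ b0.
have CM := @conv_main R S A a0 P gamma d Qs beta P0 P1 g0 g1 d0 b0.
split; [|split].
- move=> x1 x2; split.
  + move=> H.
    have ode : forall t : R, 0 < t -> forall i,
      is_derive t (1 : R) (fun u => (fun=> x1) u i) (f1 a0 d P gamma Qs x1 x2 i) /\
      is_derive t (1 : R) (fun u => (fun=> x2) u i) (f2 d beta x1 x2 i).
      move=> t _ i; have [-> ->] := H i.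
      by split; exact: is_derive_cst.
    move=> i; split.
    * apply/eqP; apply/negPn/negP => hne.
      have [T HT] := CM _ _ ode `|x1 i| ltac:(by rewrite normr_gt0).
      by have [] := HT T (lexx _) i; rewrite ltxx.
    * apply/eqP; apply/negPn/negP => hne.
      have [T HT] := CM _ _ ode `|x2 i| ltac:(by rewrite normr_gt0).
      by have [] := HT T (lexx _) i; rewrite ltxx.
  + move=> H i; rewrite /f1 /f2 !(proj1 (H i)) !(proj2 (H i)).
    set g := Papp _ _ _.
    have : `|g| <= 0.
      apply: Papp_bound => // s; apply: Mmax_lip => j.
      by rewrite (proj2 (H j)) normr0.
    rewrite normr_le0 => /eqP ->.
    by split; rewrite ?mulr0 ?oppr0 ?add0r ?subrr.
- move=> x1 x2 ode i; split; apply: conv_to => eps eps0;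
    have [T HT] := CM _ _ ode eps eps0; exists T => t hT;
    rewrite subr0; have [] := HT t hT i => //.
- move=> QA QB ode i.
  pose x1 t j := QA t j - Qs j.
  pose x2 t j := QB t j - Qs j.
  have ode' : forall t : R, 0 < t -> forall i,
      is_derive t (1 : R) (fun u => x1 u i) (f1 a0 d P gamma Qs (x1 t) (x2 t) i) /\
      is_derive t (1 : R) (fun u => x2 u i) (f2 d beta (x1 t) (x2 t) i).
    move=> t t0 j; have [h1 h2] := ode t t0 j.
    have e1 := is_deriveB h1 (is_derive_cst (Qs j) t (1:R)).
    have e2 := is_deriveB h2 (is_derive_cst (Qs j) t (1:R)).
    split.
    + suff -> : f1 a0 d P gamma Qs (x1 t) (x2 t) j =
          gA a0 d P Rw gamma (QA t) (QB t) j - 0 by exact: e1.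
      rewrite /f1 /gA /x1 /x2 /=.
      have -> : (fun j0 => QB t j0 - Qs j0 + Qs j0) = QB t.
        by apply/funext => j0; rewrite subrK.
      rewrite Papp_sub (HQ j); ring.
    + suff -> : f2 d beta (x1 t) (x2 t) j =
          gB d beta (QA t) (QB t) j - 0 by exact: e2.
      by rewrite /f2 /gB /x1 /x2 /=; ring.
  split; apply: conv_to => eps eps0;
    have [T HT] := CM _ _ ode' eps eps0; exists T => t hT;
    have [] := HT t hT i => //.
Qed.
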